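(* Let $0<\alpha<\beta<1$ and let $t\geq 1$ be an integer. Let $\mathcal{P}_t'$ denote the set of real polynomials $f$ of degree at most $t$ satisfying $f(0)=0$ and $f(1)=1$. Then the minimization problem \[ \min_{f\in\mathcal{P}_t'} \frac{\max_{\lambda\in[0,\alpha]}|f(\lambda)|}{\min_{\lambda\in[\beta,1]}|f(\lambda)|} \] is solved by \[ f_t^\star(\lambda)=\prod_{s=0}^{t-1}\frac{\lambda-r_{s,t}}{1-r_{s,t}},\qquad r_{s,t}:=\alpha\,\frac{\cos\!\big(\frac{\pi(s+1/2)}{t}\big)+\cos\!\big(\frac{\pi}{2t}\big)}{1+\cos\!\big(\frac{\pi}{2t}\big)} . \]
   Context: The objective is taken to be $+\infty$ when the denominator vanishes. The polynomial $f_t^\star$ is an affinely reparametrized Chebyshev polynomial of the first kind of degree $t$; note $r_{t-1,t}=0$. *)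

(* Defs.v *)
From HB Require Import structures.
From mathcomp Require Import all_boot all_order all_algebra.
From mathcomp Require Import all_classical all_reals all_analysis.
Set Implicit Arguments. Unset Strict Implicit. Unset Printing Implicit Defensive.
Import Order.TTheory GRing.Theory Num.Theory.
Local Open Scope classical_set_scope.
Local Open Scope ring_scope.

Definition Pt' (R : realType) (t : nat) (f : {poly R}) : Prop :=
  (size f <= t.+1)%N /\ f.[0] = 0 /\ f.[1] = 1.

(* max_{lambda in [a,b]} |f(lambda)| (a sup; attained by continuity) *)
Definition max_abs_on (R : realType) (f : {poly R}) (a b : R) : R :=
  sup [set `|f.[x]| | x in `[a, b]].

Definition min_abs_on (R : realType) (f : {poly R}) (a b : R) : R :=
  inf [set `|f.[x]| | x in `[a, b]].

Definition objective (R : realType) (alpha beta : R) (f : {poly R}) : \bar R :=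
  if min_abs_on f beta 1 == 0 then +oo%E
  else ((max_abs_on f 0 alpha) / (min_abs_on f beta 1))%:E.

Definition r_st (R : realType) (alpha : R) (t s : nat) : R :=
  alpha * (cos (pi * (s%:R + 2^-1) / t%:R) + cos (pi / (2 * t%:R)))
        / (1 + cos (pi / (2 * t%:R))).

Definition fstar (R : realType) (alpha : R) (t : nat) : {poly R} :=
  \prod_(s < t) ((1 - r_st alpha t s)^-1 *: ('X - (r_st alpha t s)%:P)).

(* Main.v *)
Require Import Defs.
From HB Require Import structures.
From mathcomp Require Import all_boot all_order all_algebra.
From mathcomp Require Import all_classical all_reals all_analysis.
From mathcomp Require Import ring lra.
Import Order.TTheory GRing.Theory Num.Theory numFieldNormedType.Exports.
Local Open Scope ring_scope.

Fixpoint chebp (R : realType) (n : nat) : {poly R} * {poly R} :=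
  if n is m.+1 then ((chebp R m).2, 'X * (chebp R m).2 *+ 2 - (chebp R m).1)
  else (1, 'X).
Definition cheb (R : realType) n := (chebp R n).1.

Lemma cheb_cos (R : realType) (n : nat) (x : R) :
  (cheb R n).[cos x] = cos (n%:R * x).
Proof.
suff H : (chebp R n).1.[cos x] = cos (n%:R * x) /\
         (chebp R n).2.[cos x] = cos (n.+1%:R * x) by case: H.
elim: n => [|n [IH1 IH2]] /=.
  by rewrite hornerC mul0r cos0 hornerX mul1r.
split => //.
rewrite hornerD hornerN hornerMn hornerM hornerX IH1 IH2.
have -> : (n.+2)%:R * x = n.+1%:R * x + x by rewrite -addn1 natrD mulrDl mul1r.
have E : n%:R * x = n.+1%:R * x - x by rewrite -addn1 natrD mulrDl mul1r addrK.
rewrite E cosB cosD mulr2n; lra.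
Qed.

Lemma size_polyMn_leq (R : realType) (p : {poly R}) n : (size (p *+ n) <= size p)%N.
Proof.
elim: n => [|n IH]; first by rewrite mulr0n size_poly0.
by rewrite mulrS (leq_trans (size_polyD _ _)) // geq_max leqnn.
Qed.

Lemma size_cheb (R : realType) (n : nat) : (size (cheb R n) <= n.+1)%N.
Proof.
suff H : (size (chebp R n).1 <= n.+1)%N /\ (size (chebp R n).2 <= n.+2)%N by case: H.
elim: n => [|n [IH1 IH2]] /=.
  by rewrite size_polyC size_polyX oner_neq0.
split => //.
rewrite (leq_trans (size_polyD _ _)) // geq_max size_polyN.
apply/andP; split; last by rewrite (leq_trans IH1) // ltnW // ltnS ltnW.
rewrite (leq_trans (size_polyMn_leq _ _ _)) //.
rewrite (leq_trans (size_polyMleq _ _)) // size_polyX.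
by rewrite add2n /=.
Qed.

Lemma th_bnd (R : realType) (i t : nat) : (i < t)%N ->
  (0 : R) < (pi : R) * (i%:R + 2^-1) / t%:R < (pi : R).
Proof.
move=> it.
have t0 : 0 < t%:R :> R by rewrite ltr0n (leq_ltn_trans _ it).
have it' : (i%:R + 1 <= t%:R :> R) by rewrite natr1 ler_nat.
have i0 : 0 <= i%:R :> R by [].
have p0 := @pi_gt0 R.
apply/andP; split.
  by rewrite divr_gt0 // mulr_gt0 //; lra.
rewrite ltr_pdivrMr //; nra.
Qed.

Lemma cos_th0 (R : realType) (i t : nat) : (i < t)%N ->
  cos (t%:R * (pi * (i%:R + 2^-1) / t%:R)) = 0 :> R.
Proof.
move=> it.
have t0 : t%:R != 0 :> R by rewrite pnatr_eq0 -lt0n (leq_ltn_trans _ it).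
rewrite mulrC divfK // mulrDr.
have -> : (pi : R) * i%:R + pi * 2^-1 = pi / 2 + pi *+ i by rewrite mulr_natr addrC.
by rewrite (alternatingn (@cosDpi R)) cos_pihalf mulr0.
Qed.

Lemma prod_cos (R : realType) (t : nat) : exists2 k : R, k != 0 &
  forall phi, \prod_(i < t) (cos phi - cos (pi * (i%:R + 2^-1) / t%:R)) =
              k * cos (t%:R * phi).
Proof.
set rs := [seq cos (pi * (i%:R + 2^-1) / t%:R) | i <- iota 0 t] : seq R.
have rt : all (root (cheb R t)) rs.
  apply/allP => z /mapP [i]; rewrite mem_iota add0n /= => it ->.
  by rewrite /root cheb_cos cos_th0.
have uq : uniq_roots rs.
  rewrite uniq_rootsE map_inj_in_uniq ?iota_uniq //.
  move=> i j; rewrite !mem_iota !add0n /= => it jt /cos_inj.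
  case/andP: (@th_bnd R _ _ it) => i0 ip; case/andP: (@th_bnd R _ _ jt) => j0 jp.
  rewrite !in_itv /= !ltW // => /(_ isT isT).
  have t0 : t%:R != 0 :> R by rewrite pnatr_eq0 -lt0n (leq_ltn_trans _ it).
  move=> E; have : (i%:R : R) = j%:R.
    apply: (addIr 2^-1); apply: (mulfI (lt0r_neq0 (@pi_gt0 R))).
    exact: (mulIf (invr_neq0 t0)).
  by move/eqP; rewrite eqr_nat => /eqP.
have [q Hq] := uniq_roots_prod_XsubC rt uq.
set Q := \prod_(z <- rs) ('X - z%:P) in Hq.
have Qm : Q \is monic by apply: monic_prod_XsubC.
have sQ : size Q = t.+1 by rewrite size_prod_XsubC size_map size_iota.
have c0 : cheb R t != 0.
  apply/eqP => c0; have := cheb_cos R t 0.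
  by rewrite c0 horner0 mulr0 cos0 => /eqP; rewrite eq_sym oner_eq0.
have q0 : q != 0 by apply: contraNneq c0 => q0; rewrite Hq q0 mul0r.
have sq : (size q <= 1)%N.
  have := size_cheb R t; rewrite Hq (size_mul q0 (monic_neq0 Qm)) sQ addnS /=.
  by move=> H; rewrite -(leq_add2r t) add1n.
have q00 : q`_0 != 0 by apply: contraNneq q0 => e; rewrite (size1_polyC sq) e.
exists (q`_0)^-1; first by rewrite invr_eq0.
move=> phi; rewrite -cheb_cos Hq (size1_polyC sq) hornerCM coefC /= mulKf //.
rewrite horner_prod big_map -(big_mkord xpredT (fun i => cos phi - cos (pi * (i%:R + 2^-1) / t%:R))) /index_iota subn0.
by apply: eq_bigr => i _; rewrite hornerXsubC.
Qed.

Section Main.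
Variables (R : realType) (alpha beta : R) (t : nat).
Hypotheses (h0a : 0 < alpha) (hab : alpha < beta) (hb1 : beta < 1) (ht : (1 <= t)%N).

Let th (i : nat) : R := pi * (i%:R + 2^-1) / t%:R.
Let cc : R := cos (pi / (2 * t%:R)).
Let aa : R := alpha / (1 + cc).

Lemma t0 : 0 < t%:R :> R. Proof. by rewrite ltr0n. Qed.

Lemma cc_bnd : 0 <= cc <= 1.
Proof.
rewrite cos_le1 andbT; apply: cos_ge0_pihalf.
have p0 := @pi_gt0 R; have t1 : 1 <= t%:R :> R by rewrite ler1n.
apply/andP; split.
  apply: (@le_trans _ _ 0); first lra.
  by rewrite divr_ge0 // ?mulr_ge0 //; lra.
rewrite ler_pdivrMr ?mulr_gt0 //; last lra.
have -> : pi / 2 * (2 * t%:R) = pi * t%:R :> R by field.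
rewrite -[X in X <= _]mulr1; apply: ler_wpM2l; lra.
Qed.

Lemma aa_gt0 : 0 < aa.
Proof. case/andP: cc_bnd => c0 c1; rewrite divr_gt0 //; lra. Qed.

Lemma r_stE i : r_st alpha t i = aa * (cos (th i) + cc).
Proof. by rewrite /r_st /aa /th /cc mulrAC. Qed.

Lemma r_le_alpha i : r_st alpha t i <= alpha.
Proof.
rewrite r_stE /aa; case/andP: cc_bnd => c0 c1.
have q : (cos (th i) + cc) / (1 + cc) <= 1.
  rewrite ler_pdivrMr; last lra.
  have := cos_le1 (th i); lra.
rewrite mulrAC -mulrA -[leRHS]mulr1 ler_wpM2l //; exact: ltW.
Qed.

Lemma sub_r_eq i x : x - r_st alpha t i = aa * ((x / aa - cc) - cos (th i)).
Proof. rewrite r_stE; have := aa_gt0; move=> a0; field; lra. Qed.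

Definition Pp : {poly R} := \prod_(s < t) ('X - (r_st alpha t s)%:P).

Lemma PpE x : Pp.[x] = aa ^+ t * \prod_(i < t) ((x / aa - cc) - cos (th i)).
Proof.
rewrite /Pp horner_prod.
under eq_bigr => i _ do rewrite hornerXsubC sub_r_eq.
by rewrite big_split /= prodr_const card_ord.
Qed.

Lemma Pcos : exists2 A : R, A != 0 & forall phi, Pp.[aa * (cos phi + cc)] = A * cos (t%:R * phi).
Proof.
have [k k0 Hk] := prod_cos R t.
exists (aa ^+ t * k); first by rewrite mulf_neq0 // expf_neq0 // lt0r_neq0 // aa_gt0.
move=> phi; rewrite PpE -mulrA -Hk; congr (_ * _); apply: eq_bigr => i _.
have := aa_gt0 => a0; congr (_ - _); rewrite /th; field; lra.
Qed.

Lemma Pp_mono x : beta <= x -> Pp.[beta] <= Pp.[x].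
Proof.
move=> bx; rewrite /Pp !horner_prod; apply: ler_prod => i _.
rewrite !hornerXsubC; have := r_le_alpha i => ri.
by rewrite subr_ge0 (le_trans ri (ltW hab)) lerD2r.
Qed.

Lemma Pp_beta_pos : 0 < Pp.[beta].
Proof.
rewrite /Pp horner_prod; apply: prodr_gt0 => i _.
rewrite hornerXsubC subr_gt0; exact: le_lt_trans (r_le_alpha i) hab.
Qed.

Lemma size_Pp : size Pp = t.+1.
Proof. by rewrite /Pp size_prod_XsubC [index_enum _]unlock -enumT size_enum_ord. Qed.

Definition Kf : R := \prod_(s < t) (1 - r_st alpha t s)^-1.

Lemma fstar_eq : fstar alpha t = Kf *: Pp.
Proof. by rewrite /fstar scaler_prod. Qed.

Lemma Kf_gt0 : 0 < Kf.
Proof.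
apply: prodr_gt0 => i _; rewrite invr_gt0 subr_gt0.
by move: (r_le_alpha i) hab hb1; lra.
Qed.

Lemma fstar1 : (fstar alpha t).[1] = 1.
Proof.
rewrite /fstar horner_prod; apply: big1 => i _.
rewrite hornerZ hornerXsubC mulVf //.
by apply: lt0r_neq0; move: (r_le_alpha i) hab hb1; lra.
Qed.

Lemma sgn_aux (e g0 g1 : R) : `|g0| < `|e| -> `|g1| < `|e| -> (- e - g1) * (e - g0) < 0.
Proof.
move=> /ltr_normlP[a b] /ltr_normlP[c d]; case: (lerP 0 e) => e0.
  rewrite ger0_norm // in a b c d; nra.
rewrite ltr0_norm // in a b c d; nra.
Qed.

Lemma root_between (H : {poly R}) (a b : R) : a < b -> H.[a] * H.[b] < 0 ->
  exists z, a < z < b /\ root H z.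
Proof.
move=> ab Hab.
case: (@IVT R (horner H) a b 0 (ltW ab)) => [| |c cin Hc].
- by apply/continuous_subspaceT => ?; exact: continuous_horner.
- rewrite ge_min le_max; have [ha|ha] := lerP H.[a] 0.
    have hb : 0 <= H.[b].
      by rewrite leNgt; apply/negP => hb; move: Hab; rewrite ltNge mulr_le0 // ltW.
    by apply/andP; split; apply/orP; [left|right].
  have hb : H.[b] <= 0.
    by rewrite leNgt; apply/negP => hb; move: Hab; rewrite ltNge mulr_ge0 // ltW.
  by apply/andP; split; apply/orP; [right|left; exact: ltW].
- exists c; split; last by rewrite /root Hc.
  move: cin; rewrite in_itv /= => /andP[ac cb].
  rewrite !lt_neqAle ac cb !andbT; apply/andP; split.
    by apply/eqP => e; move: Hab; rewrite e Hc mul0r ltxx.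
  by apply/eqP => e; move: Hab; rewrite -e Hc mulr0 ltxx.
Qed.

Variable (A : R).
Hypothesis (A0 : A != 0) (HA : forall phi, Pp.[aa * (cos phi + cc)] = A * cos (t%:R * phi)).

Definition mu (j : nat) : R := aa * (cos (j%:R * pi / t%:R) + cc).

Let u : R := pi / t%:R.
Lemma u_gt0 : 0 < u. Proof. by rewrite divr_gt0 ?pi_gt0 ?t0. Qed.
Lemma piE : pi = t%:R * u.
Proof. by rewrite /u mulrC divfK // lt0r_neq0 // t0. Qed.
Lemma phiE j : j%:R * pi / t%:R = j%:R * u. Proof. by rewrite /u mulrA. Qed.
Lemma psiE : pi - pi / (2 * t%:R) = t%:R * u - u / 2.
Proof. rewrite /u; have := t0; have := @pi_gt0 R; move=> p0 tt0; field; lra. Qed.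

Lemma cos_psi : cos (pi - pi / (2 * t%:R)) = - cc.
Proof. by rewrite addrC cosDpi cosN. Qed.

Lemma Pp_mu j : Pp.[mu j] = A * (-1) ^+ j.
Proof.
rewrite /mu HA; have := t0 => tt0.
have -> : t%:R * (j%:R * pi / t%:R) = 0 + (pi : R) *+ j.
  by rewrite add0r -mulr_natl; field; lra.
by rewrite (alternatingn (@cosDpi R)) cos0 mulr1.
Qed.

Lemma mu0 : mu 0 = alpha.
Proof.
rewrite /mu mul0r mul0r cos0 /aa; case/andP: cc_bnd => c0 c1.
by rewrite divfK //; apply: lt0r_neq0; lra.
Qed.

Lemma mu_le j : mu j <= alpha.
Proof.
rewrite -mu0 /mu ler_pM2l ?aa_gt0 // lerD2r mul0r mul0r cos0; exact: cos_le1.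
Qed.

Lemma ang_in j : (j <= t)%N -> j%:R * (pi : R) / t%:R \in `[0, pi].
Proof.
move=> jt; rewrite phiE in_itv /= piE; have := u_gt0 => u0.
have : j%:R <= t%:R :> R by rewrite ler_nat.
have : 0 <= j%:R :> R by []. move=> ? ?.
apply/andP; split; nra.
Qed.

Lemma psi_in : (pi : R) - pi / (2 * t%:R) \in `[0, pi].
Proof.
rewrite psiE in_itv /= piE; have := u_gt0 => u0.
have : 1 <= t%:R :> R by rewrite ler1n. move=> ?.
apply/andP; split; nra.
Qed.

Lemma mu_pos j : (j < t)%N -> 0 < mu j.
Proof.
move=> jt; rewrite /mu mulr_gt0 ?aa_gt0 //.
rewrite -[cc]opprK -cos_psi subr_gt0 ltr_cos ?ang_in ?psi_in ?(ltnW jt) //.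
rewrite phiE psiE; have := u_gt0 => u0.
have : j%:R + 1 <= t%:R :> R by rewrite natr1 ler_nat. move=> ?.
nra.
Qed.

Lemma mu_dec j : (j.+1 < t)%N -> mu j.+1 < mu j.
Proof.
move=> jt; rewrite /mu ltr_pM2l ?aa_gt0 // ltrD2r.
rewrite ltr_cos ?ang_in ?(ltnW jt) ?(ltnW (ltnW jt)) //.
rewrite !phiE; have := u_gt0 => u0; rewrite -natr1; nra.
Qed.

Lemma Pp0 : Pp.[0] = 0.
Proof.
have E : aa * (cos (pi - pi / (2 * t%:R)) + cc) = 0 by rewrite cos_psi addNr mulr0.
rewrite -{1}E HA; have := t0 => tt0.
have -> : t%:R * (pi - pi / (2 * t%:R)) = - (pi / 2) + (pi : R) *+ t.
  by rewrite -mulr_natl; field; lra.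
by rewrite (alternatingn (@cosDpi R)) cosN cos_pihalf !mulr0.
Qed.

Lemma Pp_bnd x : 0 <= x <= alpha -> `|Pp.[x]| <= `|A|.
Proof.
move=> /andP[x0 xa].
set y := x / aa - cc.
have a0 := aa_gt0.
case/andP: cc_bnd => c0 c1.
have ya : x / aa <= 1 + cc.
  rewrite ler_pdivrMr // /aa mulrC divfK //; last by apply: lt0r_neq0; lra.
have y0 : 0 <= x / aa by rewrite divr_ge0 // ltW.
have yin : y \in `[-1, 1] by rewrite in_itv /= /y; apply/andP; split; lra.
have -> : x = aa * (cos (acos y) + cc) by rewrite acosK // /y; field; lra.
rewrite HA normrM ler_piMr //; exact: cos_max.
Qed.

Lemma opt (g : {poly R}) (M : R) : (size g <= t.+1)%N -> g.[0] = 0 ->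
  (forall x, 0 <= x <= alpha -> `|g.[x]| <= M) ->
  `|g.[beta]| * `|A| <= M * Pp.[beta].
Proof.
move=> sg g0 gM; have Pb := Pp_beta_pos.
rewrite leNgt; apply/negP => Hlt.
set k := g.[beta] / Pp.[beta].
have kA : M < `|k * A|.
  rewrite normrM normf_div (gtr0_norm Pb) mulrAC ltr_pdivlMr //.
set H := k *: Pp - g.
have Hb : root H beta.
  by rewrite /root /H hornerD hornerN hornerZ /k divfK ?subrr // lt0r_neq0.
have H0 : root H 0 by rewrite /root /H hornerD hornerN hornerZ Pp0 g0 mulr0 subrr.
have Hmu j : H.[mu j] = k * A * (-1) ^+ j - g.[mu j].
  by rewrite /H hornerD hornerN hornerZ Pp_mu mulrA.
have gmu j : (j < t)%N -> `|g.[mu j]| < `|k * A|.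
  move=> jt; apply: le_lt_trans kA; apply: gM.
  by rewrite mu_le ltW // mu_pos.
have Hsgn j : (j.+1 < t)%N -> H.[mu j.+1] * H.[mu j] < 0.
  move=> jt; rewrite !Hmu exprS mulN1r mulrN.
  apply: sgn_aux; rewrite normrM normr_sign mulr1.
    exact: gmu (ltnW jt).
  exact: gmu.
have Hz j : (j.+1 < t)%N -> exists z, mu j.+1 < z < mu j /\ root H z.
  move=> jt; apply: root_between; [exact: mu_dec | exact: Hsgn].
have L : forall n, (n < t)%N -> exists s : seq R,
    [/\ size s = n, uniq s, all (root H) s & all (fun z => mu n < z <= alpha) s].
  elim=> [|n IH] lt; first by exists [::].
  have [s [ss us rs bs]] := IH (ltnW lt).
  have [z [/andP[z1 z2] zr]] := Hz n lt.
  exists (z :: s); split => /=.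
  - by rewrite ss.
  - rewrite us andbT; apply/negP => zs.
    by have := allP bs z zs => /andP[/(lt_trans z2)]; rewrite ltxx.
  - by rewrite zr rs.
  - rewrite z1 (le_trans (ltW z2) (mu_le n)) /=.
    apply/allP => y ys; have /andP[y1 y2] := allP bs y ys.
    by rewrite y2 andbT (lt_trans (@mu_dec _ lt) y1).
have tt : (t.-1 < t)%N by rewrite prednK.
have [s [ss us rs bs]] := L t.-1 tt.
have HZ : H = 0.
  apply/eqP; apply: contraT => Hn0.
  have := @max_poly_roots R H (0 :: beta :: s) Hn0.
  have sH : (size H <= t.+1)%N.
    rewrite (leq_trans (size_polyD _ _)) // geq_max size_polyN sg andbT.
    by rewrite (leq_trans (size_scale_leq _ _)) // size_Pp.
  rewrite /= H0 Hb rs /= in_cons negb_or.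
  have b0 : beta != 0 by apply: lt0r_neq0; move: h0a hab; lra.
  rewrite eq_sym b0 /=.
  have -> : 0 \notin s.
    apply/negP => zs; have /andP[y1 _] := allP bs 0 zs.
    by have := @mu_pos _ tt; rewrite ltNge (ltW y1).
  have -> : beta \notin s.
    apply/negP => zs; have /andP[_ y2] := allP bs beta zs.
    by move: hab; rewrite ltNge y2.
  rewrite us ss prednK // => /(_ isT isT) H1.
  by move: (leq_trans H1 sH); rewrite ltnn.
have ga : g.[alpha] = k * A.
  have := Hmu 0%N; rewrite HZ horner0 expr0 mulr1 mu0 => /eqP.
  by rewrite eq_sym subr_eq0 => /eqP.
have := gM alpha; rewrite lexx ltW // => /(_ isT); rewrite ga.
by rewrite leNgt kA.
Qed.
End Main.

Lemma poly_bnd01 (R : realType) (f : {poly R}) x : 0 <= x <= 1 ->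
  `|f.[x]| <= \sum_(i < size f) `|f`_i|.
Proof.
move=> /andP[x0 x1]; rewrite horner_coef (le_trans (ler_norm_sum _ _ _)) //.
apply: ler_sum => i _; rewrite normrM normrX -[leRHS]mulr1 ler_wpM2l //.
by rewrite exprn_ile1 // ger0_norm.
Qed.

Lemma max_ub (R : realType) (f : {poly R}) a b x : 0 <= a -> b <= 1 -> a <= x <= b ->
  `|f.[x]| <= max_abs_on f a b.
Proof.
move=> a0 b1 xab; apply: ub_le_sup; last by exists x.
exists (\sum_(i < size f) `|f`_i|) => y [z /= zab <-].
apply: poly_bnd01; move: zab; rewrite in_itv /= => /andP[z1 z2].
by apply/andP; split; [exact: le_trans z1|exact: le_trans b1].
Qed.

Lemma min_lb (R : realType) (f : {poly R}) a b x : a <= x <= b ->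
  min_abs_on f a b <= `|f.[x]|.
Proof.
move=> xab; apply: ge_inf; last by exists x.
by exists 0 => y [z _ <-].
Qed.

Lemma min_ge0 (R : realType) (f : {poly R}) a b : a <= b -> 0 <= min_abs_on f a b.
Proof.
move=> ab; apply: lb_le_inf; first by exists `|f.[a]|, a => //=; rewrite in_itv /= lexx ab.
by move=> y [z _ <-].
Qed.

Theorem theorem1 (R : realType) (alpha beta : R) (t : nat)
  (h0a : 0 < alpha) (hab : alpha < beta) (hb1 : beta < 1) (ht : (1 <= t)%N) :
  Pt' t (fstar alpha t) /\
  (forall f : {poly R}, Pt' t f ->
     (objective alpha beta (fstar alpha t) <= objective alpha beta f)%E).
Proof.
have [A A0 HA] : exists2 A : R, A != 0 & _ := @Pcos R alpha t h0a ht.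
have hfs x : (fstar alpha t).[x] = Kf R alpha t * (Pp R alpha t).[x].
  by rewrite fstar_eq hornerZ.
have Pt : Pt' t (fstar alpha t).
  split; [|split].
  - by rewrite fstar_eq (leq_trans (size_scale_leq _ _)) // size_Pp.
  - by rewrite hfs (@Pp0 R alpha t ht A HA) mulr0.
  - by apply: (@fstar1 R alpha beta t).
split => // f [sf [f0 f1]].
have Pb : 0 < (Pp R alpha t).[beta] by apply: (@Pp_beta_pos R alpha beta t).
have Kp : 0 < Kf R alpha t by apply: (@Kf_gt0 R alpha beta t).
have a0 : (0 : R) <= alpha by exact: ltW.
have a1 : alpha <= 1 by move: hab hb1; lra.
have b1 : beta <= 1 by exact: ltW.
have b0 : 0 <= beta by move: h0a hab; lra.
set Ms := max_abs_on (fstar alpha t) 0 alpha.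
set ms := min_abs_on (fstar alpha t) beta 1.
have Msle : Ms <= Kf R alpha t * `|A|.
  apply: ge_sup; first by exists `|(fstar alpha t).[0]|, 0 => //=; rewrite in_itv /= lexx a0.
  move=> y [z zin <-]; rewrite hfs normrM gtr0_norm // ler_pM2l //.
  by apply: (@Pp_bnd R alpha t h0a ht A HA); move: zin => /=; rewrite in_itv.
have Ms0 : 0 <= Ms.
  apply: (le_trans (normr_ge0 (fstar alpha t).[0])); apply: max_ub => //.
  by rewrite lexx a0.
have msge : Kf R alpha t * (Pp R alpha t).[beta] <= ms.
  apply: lb_le_inf; first by exists `|(fstar alpha t).[beta]|, beta => //=; rewrite in_itv /= lexx b1.
  move=> y [z zin <-]; rewrite hfs normrM gtr0_norm // ler_pM2l //.
  move: zin => /=; rewrite in_itv /= => /andP[z1 _].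
  exact: le_trans (@Pp_mono R alpha beta t h0a hab ht _ z1) (ler_norm _).
have ms0 : 0 < ms by apply: lt_le_trans msge; rewrite mulr_gt0.
rewrite /objective -/Ms -/ms (negbTE (lt0r_neq0 ms0)).
case: ifP => [_|mf0]; first exact: leey.
rewrite lee_fin.
set Mf := max_abs_on f 0 alpha.
set mf := min_abs_on f beta 1.
have mfpos : 0 < mf by rewrite lt0r mf0 min_ge0.
have mfle : mf <= `|f.[beta]| by apply: min_lb; rewrite lexx b1.
have Mf0 : 0 <= Mf.
  apply: (le_trans (normr_ge0 f.[0])); apply: max_ub => //.
  by rewrite lexx a0.
have hopt : `|f.[beta]| * `|A| <= Mf * (Pp R alpha t).[beta].
  apply: (@opt R alpha beta t h0a hab ht A HA f Mf sf f0) => x xin.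
  exact: max_ub.
rewrite ler_pdivrMr // mulrAC ler_pdivlMr //.
have A0' : 0 <= `|A| by [].
move: Msle Ms0 msge mfpos mfle Mf0 hopt Kp Pb A0'; nra.
Qed.
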